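(* Let $F(x,y)=\sum_{i=0}^2\sum_{j=0}^2 c_{i,j}x^iy^j=Y_0(y)+xY_1(y)+x^2Y_2(y)$ be a biquadratic polynomial. Define $$\mathcal R(\Sigma,\Pi)=\operatorname{Res}_y\big(\Sigma\,Y_2(y)+Y_1(y),\ \Pi\,Y_2(y)-Y_0(y)\big),$$ the resultant (Sylvester $4\times4$ determinant) with respect to $y$ of these two polynomials of degree $\le 2$ in $y$. Then $\mathcal R$ is a polynomial of total degree at most $2$ in $(\Sigma,\Pi)$; i.e. the coefficients of $\Sigma^2\Pi^2$, $\Sigma^2\Pi$ and $\Sigma\Pi^2$ vanish. Consequently $E(x,z):=\mathcal R(x+z,xz)$ is a symmetric biquadratic polynomial, $E(x,z)=\sum_{i,j=0}^2 e_{i,j}x^iz^j$ with $e_{i,j}=e_{j,i}$, and for every elliptic sequence $(x_n,y_n)_{n\in\mathbb Z}$ on $F$ with $Y_2(y_n)\neq0$ for all $n$, one has $E(x_n,x_{n+1})=0$ for all $n\in\mathbb Z$.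
   Context: Write $Y_i(y)=\sum_{j=0}^2 c_{i,j}y^j$ and $X_j(x)=\sum_{i=0}^2 c_{i,j}x^i$, so that $F(x,y)=Y_0(y)+xY_1(y)+x^2Y_2(y)=X_0(x)+yX_1(x)+y^2X_2(x)$. An elliptic sequence on $F$ is a doubly infinite sequence of points $(x_n,y_n)_{n\in\mathbb Z}$ such that for every $n$, $x_n$ and $x_{n+1}$ are the two roots (with multiplicity) of the quadratic polynomial $x\mapsto F(x,y_n)$, and $y_{n-1}$ and $y_n$ are the two roots of $y\mapsto F(x_n,y)$. In particular $F(x_n,y_n)=F(x_{n+1},y_n)=0$, $x_n+x_{n+1}=-Y_1(y_n)/Y_2(y_n)$ and $x_nx_{n+1}=Y_0(y_n)/Y_2(y_n)$ whenever $Y_2(y_n)\ne0$. *)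

(* Defs.v *)
From HB Require Import structures.
From mathcomp Require Import all_boot all_order all_algebra.
Set Implicit Arguments. Unset Strict Implicit. Unset Printing Implicit Defensive.
Import Order.TTheory GRing.Theory Num.Theory.
Local Open Scope ring_scope.

(* Coefficients of the biquadratic F(x,y) = sum_{i,j<=2} c i j x^i y^j are
   given by c : nat -> nat -> R; only the values with i, j <= 2 are used. *)

Section Biquad.
Variable R : fieldType.
Variable c : nat -> nat -> R.

Definition Ycoef (i : nat) (y : R) : R := \sum_(j < 3) c i j * y ^+ j.
Definition Xcoef (j : nat) (x : R) : R := \sum_(i < 3) c i j * x ^+ i.

Definition Fx (y : R) : {poly R} := \sum_(i < 3) Ycoef i y *: 'X^i.
Definition Fy (x : R) : {poly R} := \sum_(j < 3) Xcoef j x *: 'X^j.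
End Biquad.

Definition roots2 (R : fieldType) (q : {poly R}) (a b : R) : Prop :=
  q = q`_2 *: (('X - a%:P) * ('X - b%:P)).

Definition elliptic_seq (R : fieldType) (c : nat -> nat -> R)
  (xs ys : int -> R) : Prop :=
  forall n : int,
    roots2 (Fx c (ys n)) (xs n) (xs (n + 1)) /\
    roots2 (Fy c (xs n)) (ys (n - 1)) (ys n).

(* Sylvester 4x4 matrix of a2 y^2 + a1 y + a0 and b2 y^2 + b1 y + b0
   (formal degree 2 each). *)
Definition sylv4 (S : comRingType) (a b : nat -> S) : 'M[S]_4 :=
  \matrix_(i < 4, j < 4)
    if (i < 2)%N then (if (i <= j <= i + 2)%N then a (2 + i - j)%N else 0)
    else (if (i - 2 <= j <= i)%N then b (i - j)%N else 0).

Definition res2 (S : comRingType) (a b : nat -> S) : S := \det (sylv4 a b).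

(* Bivariate polynomials in {poly {poly R}}: the outer variable is 'X,
   the inner variable is 'X%:P; P`_a`_b is the coefficient of
   (outer)^a (inner)^b. *)
Definition C2 (R : fieldType) (r : R) : {poly {poly R}} := r%:P%:P.

(* R(Sigma, Pi) = Res_y(Sigma Y2(y) + Y1(y), Pi Y2(y) - Y0(y)),
   with Sigma = outer variable, Pi = inner variable. *)
Definition Rpoly (R : fieldType) (c : nat -> nat -> R) : {poly {poly R}} :=
  res2 (fun j => 'X * C2 (c 2%N j) + C2 (c 1%N j))
       (fun j => ('X)%:P * C2 (c 2%N j) - C2 (c 0%N j)).

Definition eval2 (R : fieldType) (P : {poly {poly R}}) (s p : {poly {poly R}})
  : {poly {poly R}} :=
  \sum_(i < size P) \sum_(j < size P`_i) C2 (P`_i`_j) * s ^+ i * p ^+ j.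

(* E(x,z) = R(x+z, xz), with x = outer variable, z = inner variable. *)
Definition Epoly (R : fieldType) (c : nat -> nat -> R) : {poly {poly R}} :=
  eval2 (Rpoly c) ('X + ('X)%:P) ('X * ('X)%:P).

(* Main.v *)
Require Import Defs.
From HB Require Import structures.
From mathcomp Require Import all_boot all_order all_algebra.
From mathcomp Require Import ring.
Import Order.TTheory GRing.Theory Num.Theory.
Local Open Scope ring_scope.

Definition resf {S : comNzRingType} (a b : nat -> S) : S :=
  (a 2%N * b 0%N - a 0%N * b 2%N) ^+ 2 - (a 2%N * b 1%N - a 1%N * b 2%N) * (a 1%N * b 0%N - a 0%N * b 1%N).

Lemma sum_shrink (V : zmodType) (n m : nat) (F : nat -> V) :
  (forall k, (n <= k)%N -> F k = 0) -> (forall k, (m <= k)%N -> F k = 0) ->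
  \sum_(i < n) F i = \sum_(i < m) F i.
Proof.
wlog nm : n m / (n <= m)%N.
  move=> W Hn Hm; case: (leqP n m) => h; first exact: W.
  by symmetry; apply: W => //; apply: ltnW.
move=> Hn _; rewrite -(big_mkord xpredT) -(big_mkord xpredT F).
rewrite (big_cat_nat (leq0n n) nm) /=.
rewrite [X in _ = _ + X]big_nat_cond [X in _ = _ + X]big1 ?addr0 //.
by move=> i /andP[/andP[ni _] _]; apply: Hn.
Qed.

Lemma resf_root (S : fieldType) (a b : nat -> S) (y : S) :
  a 2%N * y ^+ 2 + a 1%N * y + a 0%N = 0 ->
  b 2%N * y ^+ 2 + b 1%N * y + b 0%N = 0 -> resf a b = 0.
Proof.
move=> hA hB.
have H : resf a b * y =
  (a 2%N * b 0%N - a 0%N * b 2%N) * y *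
     (a 2%N * (b 2%N * y ^+ 2 + b 1%N * y + b 0%N) - b 2%N * (a 2%N * y ^+ 2 + a 1%N * y + a 0%N))
  - (a 2%N * b 1%N - a 1%N * b 2%N) *
     (b 0%N * (a 2%N * y ^+ 2 + a 1%N * y + a 0%N) - a 0%N * (b 2%N * y ^+ 2 + b 1%N * y + b 0%N)).
  by rewrite /resf; ring.
move: H; rewrite hA hB !(mulr0, subr0) => /eqP; rewrite mulf_eq0 => /orP[/eqP //|/eqP y0].
rewrite /resf; move: hA hB; rewrite y0 !expr0n /= !mulr0 !add0r => -> ->.
ring.
Qed.

Definition rco {S : comNzRingType} (c : nat -> nat -> S) (a b : nat) : S :=
  let al i j := c 2%N j * c 0%N i - c 2%N i * c 0%N j in
  let be i j := c 1%N i * c 2%N j - c 1%N j * c 2%N i in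
  let ga i j := c 1%N j * c 0%N i - c 1%N i * c 0%N j in
  match a, b with
  | 0%N, 0%N => ga 2 0 ^+ 2 - ga 2 1 * ga 1 0
  | 1%N, 0%N => (al 2 0 * ga 2 0) *+ 2 - al 2 1 * ga 1 0 - ga 2 1 * al 1 0
  | 0%N, 1%N => (be 2 0 * ga 2 0) *+ 2 - be 2 1 * ga 1 0 - ga 2 1 * be 1 0
  | 2%N, 0%N => al 2 0 ^+ 2 - al 2 1 * al 1 0
  | 1%N, 1%N => (al 2 0 * be 2 0) *+ 2 - al 2 1 * be 1 0 - be 2 1 * al 1 0
  | 0%N, 2%N => be 2 0 ^+ 2 - be 2 1 * be 1 0
  | _, _ => 0
  end.

Lemma resf_expand (S : comNzRingType) (c : nat -> nat -> S) (s p : S) :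
  resf (fun j => s * c 2%N j + c 1%N j) (fun j => p * c 2%N j - c 0%N j)
  = \sum_(i < 3) \sum_(j < 3) rco c i j * s ^+ i * p ^+ j.
Proof.
rewrite !big_ord_recr !big_ord0 /= /resf /rco /=. ring.
Qed.

Lemma rco_morph (S T : comNzRingType) (f : {rmorphism S -> T}) (c : nat -> nat -> S) a b :
  rco (fun i j => f (c i j)) a b = f (rco c a b).
Proof.
rewrite /rco.
case: a => [|[|[|a]]]; case: b => [|[|[|b]]];
  by rewrite ?rmorph0 ?rmorphB ?rmorphMn ?rmorphM ?rmorphXn ?rmorphB ?rmorphM.
Qed.

Lemma res2E (S : comNzRingType) (a b : nat -> S) : res2 a b = resf a b.
Proof.
rewrite /res2 /resf.
repeat (rewrite ?det_mx00; rewrite (expand_det_row _ ord0) !big_ord_recr big_ord0 /= /cofactor).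
rewrite ?det_mx00 !mxE /= /bump /=. ring.
Qed.
Lemma term_coef (R : fieldType) (r : R) i j a b :
  (C2 r * 'X ^+ i * ('X%:P) ^+ j)`_a`_b = if (a == i) && (b == j) then r else 0.
Proof.
rewrite /C2 -rmorphXn /= mulrAC -rmorphM /= mul_polyC coefZ coefXn.
case: (a == i) => /=; last by rewrite mulr0 coef0.
by rewrite mulr1 coefCM coefXn; case: (b == j); rewrite ?mulr1 ?mulr0.
Qed.

Lemma sum_coef (R : fieldType) (f : nat -> nat -> R) a b :
  (\sum_(i < 3) \sum_(j < 3) C2 (f i j) * 'X ^+ i * ('X%:P) ^+ j)`_a`_b
  = if (a < 3)%N && (b < 3)%N then f a b else 0.
Proof.
rewrite !big_ord_recr !big_ord0 /= !add0r !coefD !term_coef.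
by case: a => [|[|[|a]]]; case: b => [|[|[|b]]] /=; rewrite ?add0r ?addr0.
Qed.

Lemma rco_C2 (R : fieldType) (c : nat -> nat -> R) a b :
  rco (fun i j => C2 (c i j)) a b = C2 (rco c a b).
Proof.
rewrite /C2 (rco_morph _ _ (polyC : {rmorphism {poly R} -> {poly {poly R}}}) (fun i j => (c i j)%:P)).
by rewrite (rco_morph _ _ (polyC : {rmorphism R -> {poly R}})).
Qed.

Lemma RpolyE (R : fieldType) (c : nat -> nat -> R) :
  Rpoly c = \sum_(i < 3) \sum_(j < 3) C2 (rco c i j) * 'X ^+ i * ('X%:P) ^+ j.
Proof.
rewrite /Rpoly res2E.
have := resf_expand _ (fun i j => C2 (c i j)) 'X ('X%:P).
rewrite /=. move=> ->.
apply: eq_bigr => i _; apply: eq_bigr => j _; by rewrite rco_C2.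
Qed.

Lemma Rcoef (R : fieldType) (c : nat -> nat -> R) a b :
  (Rpoly c)`_a`_b = if (a < 3)%N && (b < 3)%N then rco c a b else 0.
Proof. by rewrite RpolyE sum_coef. Qed.

Arguments rco : simpl never.

Lemma eval2E (R : fieldType) (c : nat -> nat -> R) (s p : {poly {poly R}}) :
  eval2 (Rpoly c) s p = \sum_(i < 3) \sum_(j < 3) C2 (rco c i j) * s ^+ i * p ^+ j.
Proof.
rewrite /eval2.
rewrite (@sum_shrink _ (size (Rpoly c)) 3
   (fun i => \sum_(j < size (Rpoly c)`_i) C2 ((Rpoly c)`_i`_j) * s ^+ i * p ^+ j)).
- apply: eq_bigr => i _ /=.
  rewrite (@sum_shrink _ (size (Rpoly c)`_i) 3
     (fun j => C2 ((Rpoly c)`_i`_j) * s ^+ i * p ^+ j)).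
  + by apply: eq_bigr => j _ /=; rewrite Rcoef ltn_ord /= ltn_ord.
  + by move=> k hk; rewrite nth_default // /C2 !polyC0 !mul0r.
  + by move=> k hk; rewrite leqNgt in hk; rewrite Rcoef (negbTE hk) andbF /C2 !polyC0 !mul0r.
- by move=> k hk; rewrite nth_default // size_poly0 big_ord0.
- move=> k hk; rewrite big1 // => j _.
  by rewrite leqNgt in hk; rewrite Rcoef (negbTE hk) /C2 !polyC0 !mul0r.
Qed.

Definition eco {R : fieldType} (c : nat -> nat -> R) (a b : nat) : R :=
  match a, b with
  | 0%N, 0%N => rco c 0 0
  | 1%N, 0%N | 0%N, 1%N => rco c 1 0
  | 2%N, 0%N | 0%N, 2%N => rco c 2 0
  | 1%N, 1%N => rco c 0 1 + rco c 2 0 *+ 2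
  | 2%N, 1%N | 1%N, 2%N => rco c 1 1
  | 2%N, 2%N => rco c 0 2
  | _, _ => 0
  end.
Arguments eco : simpl never.

Lemma EpolyE (R : fieldType) (c : nat -> nat -> R) :
  Epoly c = \sum_(i < 3) \sum_(j < 3) C2 (eco c i j) * 'X ^+ i * ('X%:P) ^+ j.
Proof.
rewrite /Epoly eval2E !big_ord_recr !big_ord0 /=.
have e21 : rco c 2 1 = 0 by [].
have e12 : rco c 1 2 = 0 by [].
have e22 : rco c 2 2 = 0 by [].
rewrite e21 e12 e22 /eco /= /C2 !polyC0 ?rmorphD ?rmorphMn ?rmorphD ?rmorphMn.
ring.
Qed.

Lemma Ecoef (R : fieldType) (c : nat -> nat -> R) a b :
  (Epoly c)`_a`_b = if (a < 3)%N && (b < 3)%N then eco c a b else 0.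
Proof. by rewrite EpolyE sum_coef. Qed.

Lemma Eeval (R : fieldType) (c : nat -> nat -> R) (x z : R) :
  ((Epoly c).[x%:P]).[z] = \sum_(i < 3) \sum_(j < 3) rco c i j * (x + z) ^+ i * (x * z) ^+ j.
Proof.
rewrite /Epoly eval2E !big_ord_recr !big_ord0 /= /C2 !hornerE /=.
ring.
Qed.

Lemma FxE (R : fieldType) (c : nat -> nat -> R) y k :
  (Fx c y)`_k = if (k < 3)%N then Ycoef c k y else 0.
Proof.
rewrite /Fx coef_sum !big_ord_recr big_ord0 /= !coefZ !coefXn add0r.
by case: k => [|[|[|k]]] /=; rewrite ?mulr0 ?mulr1 ?addr0 ?add0r.
Qed.

Lemma roots_rel (R : fieldType) (c : nat -> nat -> R) y a b :
  roots2 (Fx c y) a b ->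
  Ycoef c 1 y = - (Ycoef c 2 y * (a + b)) /\ Ycoef c 0 y = Ycoef c 2 y * (a * b).
Proof.
rewrite /roots2 => H.
have E : ('X - a%:P) * ('X - b%:P) = 'X ^+ 2 - (a + b)%:P * 'X + (a * b)%:P.
  by rewrite rmorphD rmorphM /=; ring.
rewrite E in H.
have h0 := congr1 (fun q : {poly R} => q`_0) H; have h1 := congr1 (fun q : {poly R} => q`_1) H.
move: h0 h1; rewrite /= !FxE /= !coefZ !coefD !coefN !coefXn !coefCM ?coefMX !coefX ?coefC /=.
move=> -> ->; split; ring.
Qed.

Theorem mainTheorem1 (R : fieldType) (c : nat -> nat -> R) :
  (forall a b : nat, (2 < a + b)%N -> (Rpoly c)`_a`_b = 0)
  /\ (forall i j : nat, (Epoly c)`_i`_j = (Epoly c)`_j`_i)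
  /\ (forall i j : nat, (2 < i)%N \/ (2 < j)%N -> (Epoly c)`_i`_j = 0)
  /\ (forall xs ys : int -> R,
        elliptic_seq c xs ys ->
        (forall n : int, Ycoef c 2 (ys n) != 0) ->
        forall n : int, ((Epoly c).[(xs n)%:P]).[xs (n + 1)] = 0).
Proof.
split.
  move=> a b h; rewrite Rcoef.
  by case: a h => [|[|[|a]]]; case: b => [|[|[|b]]] //=.
split.
  move=> i j; rewrite !Ecoef.
  by case: i => [|[|[|i]]]; case: j => [|[|[|j]]] //=.
split.
  move=> i j [] h; rewrite Ecoef.
    by rewrite ltnNge h.
  by rewrite (ltnNge j) h andbF.
move=> xs ys Hel _ n.
have [hY1 hY0] := roots_rel _ _ _ _ _ (Hel n).1.
rewrite Eeval -resf_expand.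
apply: (@resf_root _ _ _ (ys n)) => /=.
  have -> : ((xs n + xs (n + 1)) * c 2%N 2%N + c 1%N 2%N) * ys n ^+ 2 +
     ((xs n + xs (n + 1)) * c 2%N 1%N + c 1%N 1%N) * ys n +
     ((xs n + xs (n + 1)) * c 2%N 0%N + c 1%N 0%N)
     = (xs n + xs (n + 1)) * Ycoef c 2 (ys n) + Ycoef c 1 (ys n).
    by rewrite /Ycoef !big_ord_recr !big_ord0 /=; ring.
  by rewrite hY1; ring.
have -> : (xs n * xs (n + 1) * c 2%N 2%N - c 0%N 2%N) * ys n ^+ 2 +
   (xs n * xs (n + 1) * c 2%N 1%N - c 0%N 1%N) * ys n +
   (xs n * xs (n + 1) * c 2%N 0%N - c 0%N 0%N)
   = (xs n * xs (n + 1)) * Ycoef c 2 (ys n) - Ycoef c 0 (ys n).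
  by rewrite /Ycoef !big_ord_recr !big_ord0 /=; ring.
by rewrite hY0; ring.
Qed.
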